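(* For $0\le n\le m$ with $n\equiv m\pmod 2$, $$w_{m,n}(q)=\begin{cases}\dfrac{[n]!\,T_{f,n}(q^2)}{(1-q^{-2})^f}&\text{if } m=n+2f \text{ for some } f\in\mathbb N,\\ 0&\text{otherwise}.\end{cases}$$
   Context: Let $\mathbf U^\imath=\mathbb Q(q)[B]$ be the polynomial algebra in $B$ over $\mathbb Q(q)$, $[n]=(q^n-q^{-n})/(q-q^{-1})$, $[n]!=[1]\cdots[n]$. Define the PBW basis $\Delta_n\in\mathbf U^\imath$ ($n\ge0$) by $\Delta_0=1$ and $B\Delta_n=[n+1]\Delta_{n+1}+\frac{q^{n-1}}{1-q^{-2}}\Delta_{n-1}$ (with $\Delta_{-1}=0$); these form a basis of $\mathbf U^\imath$. Define $w_{m,n}(q)\in\mathbb Q(q)$ by $B^m=\sum_{n=0}^mw_{m,n}(q)\Delta_n$. For $f,n\ge0$, $T_{f,n}(q)\in\mathbb N[q]$ is the crossing generating function of chord diagrams: take $2f+n$ points labelled $1,\dots,2f+n$ clockwise on a circle after a basepoint, choose $n$ of them as endpoints of tethered chords (joined to the basepoint) and a perfect matching of the other $2f$ points into free chords; the crossing number is the number of pairs of free chords $\{a<b\},\{c<d\}$ with $a<c<b<d$ plus the number of pairs (tethered point $p$, free chord $\{a<b\}$) with $a<p<b$; $T_{f,n}(q)=\sum_{D}q^{\mathrm{cr}(D)}$ over all such diagrams $D$. *)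

(* Defs.v *)
From HB Require Import structures.
From mathcomp Require Import all_boot all_order all_algebra fraction.
Set Implicit Arguments. Unset Strict Implicit. Unset Printing Implicit Defensive.
Import Order.TTheory GRing.Theory Num.Theory.
Local Open Scope ring_scope.

Definition K : fieldType := {fraction {poly rat}}.
Definition q : K := tofrac ('X : {poly rat}).

Definition qint (n : nat) : K := (q ^+ n - q ^- n) / (q - q^-1).
Definition qfact (n : nat) : K := \prod_(i < n) qint i.+1.

(* U^i = Q(q)[B], modelled as {poly K} with B = 'X. *)
Definition Ui := {poly K}.
Definition B : Ui := 'X.

(* (Delta_n, Delta_{n-1}) computed from
   B Delta_n = [n+1] Delta_{n+1} + q^{n-1}/(1-q^{-2}) Delta_{n-1}. *)
Fixpoint DeltaPair (n : nat) : Ui * Ui :=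
  match n with
  | 0 => (1, 0)
  | n'.+1 =>
      let (d, dm) := DeltaPair n' in
      ((qint n'.+1)^-1 *: (B * d - ((q ^+ n' / q) / (1 - q ^- 2)) *: dm), d)
  end.
Definition Delta (n : nat) : Ui := (DeltaPair n).1.

(* Chord diagrams on the points 0..N-1 (i.e. 1..N shifted), N = 2f+n:
   an involution p; fixed points are tethered points, 2-cycles are free chords. *)
Arguments DeltaPair n : clear implicits.
Definition chord_diagram (f n : nat) (p : {ffun 'I_(2 * f + n) -> 'I_(2 * f + n)}) : bool :=
  [forall x, p (p x) == x] && (#|[set x | p x == x]| == n).

Definition crossings (N : nat) (p : {ffun 'I_N -> 'I_N}) : nat :=
  #|[set abcd : 'I_N * 'I_N * 'I_N * 'I_N |
      let: (a, b, c, d) := abcd in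
      [&& p a == b, p c == d, (a < c)%N, (c < b)%N & (b < d)%N]]|
  + #|[set tab : 'I_N * 'I_N * 'I_N |
      let: (t, a, b) := tab in
      [&& p t == t, p a == b, (a < t)%N & (t < b)%N]]|.

Definition T_eval (f n : nat) (x : K) : K :=
  \sum_(p : {ffun 'I_(2 * f + n) -> 'I_(2 * f + n)} | @chord_diagram f n p)
     x ^+ crossings p.

(* Main.v *)
Require Import Defs.
From HB Require Import structures.
From mathcomp Require Import all_boot all_order all_algebra fraction.
Import Order.TTheory GRing.Theory Num.Theory.
Local Open Scope ring_scope.
From mathcomp Require Import zify ring.
Set Implicit Arguments. Unset Strict Implicit. Unset Printing Implicit Defensive.


Section SA.
Local Close Scope ring_scope.

Lemma card_sum (T : finType) (P : pred T) : #|[set x | P x]| = \sum_x (P x : nat).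
Proof.
rewrite -sum1_card big_mkcond /=; apply: eq_bigr => x _; rewrite inE; by case: (P x).
Qed.

Definition nf {N} (p : {ffun 'I_N -> 'I_N}) (n : nat) : nat :=
  if (insub n : option 'I_N) is Some i then val (p i) else n.

Lemma nf_val N (p : {ffun 'I_N -> 'I_N}) (i : 'I_N) : nf p i = p i.
Proof. by rewrite /nf valK. Qed.

Lemma nf_ge N (p : {ffun 'I_N -> 'I_N}) n : N <= n -> nf p n = n.
Proof. by move=> H; rewrite /nf insubF // ltnNge H. Qed.

Lemma nf_lt N (p : {ffun 'I_N -> 'I_N}) n : n < N -> nf p n < N.
Proof. move=> H; rewrite /nf; case: insubP => [i _ _|]; first exact: ltn_ord. by rewrite H. Qed.

Lemma nf_inj N (p p' : {ffun 'I_N -> 'I_N}) : (forall n, n < N -> nf p n = nf p' n) -> p = p'.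
Proof. move=> H; apply/ffunP => i; apply: val_inj => /=; by rewrite -!nf_val H. Qed.

Lemma InvE N (p : {ffun 'I_N -> 'I_N}) : [forall i, p (p i) == i] = true <-> (forall n, nf p (nf p n) = n).
Proof.
apply: conj.
- move/forallP => H n; case: (ltnP n N) => Hn.
  + have -> : n = Ordinal Hn by [].
    by rewrite !nf_val; rewrite (eqP (H _)).
  + by rewrite !nf_ge.
- move=> H; apply/forallP => i; apply/eqP/val_inj => /=.
  by rewrite -!nf_val H.
Qed.

Lemma fcE N (p : {ffun 'I_N -> 'I_N}) : #|[set i | p i == i]| = \sum_(0 <= n < N) (nf p n == n).
Proof.
rewrite card_sum big_mkord; apply: eq_bigr => i _.
by rewrite nf_val.
Qed.

End SA.

Section SB.
Local Close Scope ring_scope.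

Lemma sum_only (T : finType) (t : T) (H : T -> nat) :
  (forall b, b != t -> H b = 0) -> \sum_b H b = H t.
Proof. by move=> Hb; rewrite (bigD1 t) //= big1 ?addn0. Qed.

Lemma sum4 (T : finType) (G : T * T * T * T -> nat) :
  \sum_x G x = \sum_a \sum_b \sum_c \sum_d G (a, b, c, d).
Proof. by rewrite !pair_big /=; apply: eq_bigr => [[[[a b] c] d]] _. Qed.

Lemma sum3 (T : finType) (G : T * T * T -> nat) :
  \sum_x G x = \sum_a \sum_b \sum_c G (a, b, c).
Proof. by rewrite !pair_big /=; apply: eq_bigr => [[[a b] c]] _. Qed.

Definition Fc (g : nat -> nat) (a c : nat) : nat :=
  ((a < c) && (c < g a) && (g a < g c)) + ((g c == c) && (a < c) && (c < g a)).

Definition Cr (N : nat) (g : nat -> nat) : nat :=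
  \sum_(0 <= a < N) \sum_(0 <= c < N) Fc g a c.

Lemma part1 N (p : {ffun 'I_N -> 'I_N}) :
  \sum_(a : 'I_N) \sum_(b : 'I_N) \sum_(c : 'I_N) \sum_(d : 'I_N)
     ([&& p a == b, p c == d, (a < c)%N, (c < b)%N & (b < d)%N] : nat)
  = \sum_(a : 'I_N) \sum_(c : 'I_N) ((a < c) && (c < p a) && (p a < p c) : nat).
Proof.
apply: eq_bigr => a _.
rewrite (@sum_only _ (p a)); last first.
  move=> b Hb; rewrite big1 // => c _; rewrite big1 // => d _.
  by rewrite eq_sym (negbTE Hb).
apply: eq_bigr => c _.
rewrite (@sum_only _ (p c)); last first.
  move=> d Hd; by rewrite [p c == d]eq_sym (negbTE Hd) andbF.
by rewrite !eqxx /= andbA.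
Qed.

Lemma part2 N (p : {ffun 'I_N -> 'I_N}) :
  \sum_(t : 'I_N) \sum_(a : 'I_N) \sum_(b : 'I_N)
     ([&& p t == t, p a == b, (a < t)%N & (t < b)%N] : nat)
  = \sum_(a : 'I_N) \sum_(c : 'I_N) ((p c == c) && (a < c) && (c < p a) : nat).
Proof.
rewrite exchange_big /=.
apply: eq_bigr => a _; apply: eq_bigr => c _.
rewrite (@sum_only _ (p a)); last first.
  move=> b Hb; by rewrite [p a == b]eq_sym (negbTE Hb) andbF.
by rewrite !eqxx /= !andbA.
Qed.

Lemma crossingsE N (p : {ffun 'I_N -> 'I_N}) : crossings p = Cr N (nf p).
Proof.
rewrite /crossings !card_sum sum4 sum3 part1 part2 /Cr big_mkord -big_split /=.
apply: eq_bigr => a _; rewrite big_mkord -big_split /=.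
by apply: eq_bigr => c _; rewrite /Fc !nf_val.
Qed.

End SB.

Section SC.
Local Close Scope ring_scope.

Lemma Cr_ext N g h : (forall n, n < N -> g n = h n) -> Cr N g = Cr N h.
Proof.
move=> H; apply: eq_big_nat => a /andP[_ Ha]; apply: eq_big_nat => c /andP[_ Hc].
by rewrite /Fc !H.
Qed.

Lemma Cr_step N h : (forall a, a < N -> h a <= N) -> Cr N.+1 h = Cr N h.
Proof.
move=> H1; rewrite /Cr big_nat_recr //= [X in _ + X]big1_seq ?addn0; last first.
  move=> c; rewrite mem_index_iota => /andP[_ Hc]; rewrite /Fc.
  have -> : (N < c) = false by lia.
  by rewrite !andbF.
apply: eq_big_nat => a /andP[_ Ha]; rewrite big_nat_recr //= /Fc.
have E1 : (N < h a) = false by have := H1 a Ha; lia.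
by rewrite E1 !andbF /= !addn0.
Qed.

Lemma Fc_case2 N g h a0 a c : a0 < N -> g a0 = a0 -> (forall n, n < N -> g n < N) ->
  (forall n, n < N -> h n = if n == a0 then N else g n) -> a < N -> c < N ->
  Fc h a c = Fc g a c + (a == a0) * ((g c == c) && (a0 < c)).
Proof.
move=> Ha0 Hg Hlt Hh Ha Hc; rewrite /Fc !Hh //.
have Hga := Hlt a Ha; have Hgc := Hlt c Hc.
case: (eqVneq a a0) => [->|ne1]; case: (eqVneq c a0) => [->|ne2]; rewrite ?Hg ?eqxx /=.
all: clear Hh Hlt; lia.
Qed.

Lemma Cr_case2 N g h a0 : a0 < N -> g a0 = a0 -> (forall n, n < N -> g n < N) ->
  (forall n, n < N -> h n = if n == a0 then N else g n) ->
  Cr N h = Cr N g + \sum_(0 <= c < N) ((g c == c) && (a0 < c)).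
Proof.
move=> Ha0 Hg Hlt Hh; rewrite /Cr.
under eq_big_nat => a /andP[_ Ha].
  under eq_big_nat => c /andP[_ Hc] do rewrite (Fc_case2 Ha0 Hg Hlt Hh Ha Hc).
  rewrite big_split /= -big_distrr /=.
  over.
rewrite big_split /=; congr (_ + _).
rewrite big_mkord (@sum_only _ (Ordinal Ha0)) /= ?eqxx ?mul1n //.
by move=> b Hb; rewrite (_ : (b == a0 :> nat) = false) // ; apply/negbTE; apply: contra Hb => /eqP E; apply/eqP/val_inj.
Qed.

End SC.

Section SD.
Local Close Scope ring_scope.

Lemma rank_sum (R : comNzRingType) (P : pred nat) N (x : R) :
  (\sum_(0 <= a < N | P a) x ^+ (\sum_(0 <= c < N) (P c && (a < c))%N)
  = \sum_(0 <= i < \sum_(0 <= c < N) (P c : nat)) x ^+ i)%R.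
Proof.
elim: N => [|N IH]; first by rewrite !big_geq.
rewrite big_mkcond /= big_nat_recr //= [in RHS]big_nat_recr //=.
have E : forall a, a < N -> \sum_(0 <= c < N.+1) (P c && (a < c)) = \sum_(0 <= c < N) (P c && (a < c)) + P N.
  by move=> a Ha; rewrite big_nat_recr //= Ha andbT.
have E2 : \sum_(0 <= c < N.+1) (P c && (N < c)) = 0.
  rewrite big1_seq // => c; rewrite mem_index_iota => Hc.
  have -> : (N < c) = false by lia.
  by rewrite andbF.
rewrite E2.
under eq_big_nat => a /andP[_ Ha] do rewrite E //.
case: (P N) => /=.
- rewrite addn1 big_nat_recl //= expr0 addrC; congr (_ + _)%R.
  under [RHS]eq_bigr => i _ do rewrite exprS.
  rewrite -mulr_sumr -IH [in RHS]big_mkcond /= mulr_sumr; apply: eq_bigr => a _.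
  by case: (P a); rewrite ?mulr0 // addn1 exprS.
- rewrite addn0 addr0 -IH [in RHS]big_mkcond /=; apply: eq_bigr => a _.
  by rewrite addn0.
Qed.

End SD.

Section SE.
Local Close Scope ring_scope.

Definition mk N (G : nat -> nat) : {ffun 'I_N.+1 -> 'I_N.+1} := [ffun i : 'I_N.+1 => inord (G i)].
Arguments mk : clear implicits.

Lemma nf_mk N (G : nat -> nat) : (forall n, n <= N -> G n <= N) ->
  forall n, nf (mk N G) n = if n <= N then G n else n.
Proof.
move=> HG n; case: (leqP n N) => Hn.
- have -> : n = (Ordinal (Hn : n < N.+1)) by [].
  by rewrite nf_val ffunE /= inordK // ltnS HG.
- by rewrite nf_ge.
Qed.

Definition ext N (p : {ffun 'I_N -> 'I_N}) : {ffun 'I_N.+1 -> 'I_N.+1} := mk N (nf p).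

Lemma nf_ext N (p : {ffun 'I_N -> 'I_N}) n : nf (ext p) n = nf p n.
Proof.
rewrite /ext nf_mk.
- case: (leqP n N) => // Hn; by rewrite nf_ge // ltnW.
- move=> m Hm; case: (ltnP m N) => Hm'; first by apply: ltnW; apply: nf_lt.
  by rewrite nf_ge.
Qed.

Definition res N (p : {ffun 'I_N.+1 -> 'I_N.+1}) : {ffun 'I_N -> 'I_N} :=
  [ffun j : 'I_N => odflt j (insub (nf p j))].

Lemma nf_res N (p : {ffun 'I_N.+1 -> 'I_N.+1}) n :
  nf (res p) n = if (n < N) && (nf p n < N) then nf p n else n.
Proof.
case: (ltnP n N) => Hn /=.
- have -> : n = (Ordinal Hn) by [].
  rewrite nf_val ffunE /=.
  case: insubP => [i Hi <-|/negbTE ->] //=; by rewrite ltn_ord.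
- by rewrite nf_ge.
Qed.

Definition build N (j : {ffun 'I_N -> 'I_N} * 'I_N) : {ffun 'I_N.+1 -> 'I_N.+1} :=
  mk N (fun n => if n == j.2 then N else if n == N then val j.2 else nf j.1 n).

Lemma nf_build N (j : {ffun 'I_N -> 'I_N} * 'I_N) n :
  nf (build j) n = if n <= N then (if n == j.2 then N else if n == N then val j.2 else nf j.1 n) else n.
Proof.
rewrite /build nf_mk // => m Hm.
case: (m == j.2) => //; case: eqP => _; first exact: ltnW (ltn_ord _).
case: (ltnP m N) => Hm'; first by apply: ltnW; apply: nf_lt.
by rewrite nf_ge.
Qed.

Definition destr N (p : {ffun 'I_N.+1 -> 'I_N.+1}) : option ({ffun 'I_N -> 'I_N} * 'I_N) :=
  omap (fun a => (res p, a)) (insub (nf p N)).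

End SE.

Section SF.
Local Close Scope ring_scope.

Definition Inv N (p : {ffun 'I_N -> 'I_N}) := [forall i, p (p i) == i].
Definition fc N (p : {ffun 'I_N -> 'I_N}) := #|[set i | p i == i]|.

Lemma InvP N (p : {ffun 'I_N -> 'I_N}) : Inv p <-> (forall n, nf p (nf p n) = n).
Proof. exact: InvE. Qed.

Lemma Inv_ext N (p : {ffun 'I_N -> 'I_N}) : Inv (ext p) = Inv p.
Proof.
apply/idP/idP => /InvP H; apply/InvP => n; move: (H n); by rewrite !nf_ext.
Qed.

Lemma fc_ext N (p : {ffun 'I_N -> 'I_N}) : fc (ext p) = (fc p).+1.
Proof.
rewrite /fc !fcE big_nat_recr //= nf_ext nf_ge // eqxx addn1; congr _.+1.
by apply: eq_big_nat => n _; rewrite nf_ext.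
Qed.

Lemma cr_ext N (p : {ffun 'I_N -> 'I_N}) : crossings (ext p) = crossings p.
Proof.
rewrite !crossingsE (@Cr_ext _ _ (nf p)); last by move=> n _; rewrite nf_ext.
rewrite Cr_step // => a Ha; apply: ltnW; exact: nf_lt.
Qed.

Lemma res_ext N (p : {ffun 'I_N -> 'I_N}) : res (ext p) = p.
Proof.
apply: nf_inj => n Hn; rewrite nf_res Hn nf_ext nf_lt //.
Qed.

Lemma ext_res N (p : {ffun 'I_N.+1 -> 'I_N.+1}) : Inv p -> nf p N = N -> ext (res p) = p.
Proof.
move=> /InvP HI HN; apply: nf_inj => n Hn; rewrite nf_ext nf_res.
case: (ltnP n N) => Hn' /=.
- have Hle : nf p n < N.+1 by apply: nf_lt.
  case: (ltnP (nf p n) N) => // Hge.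
  have E : nf p n = N by lia.
  have := HI n; rewrite E HN; lia.
- have -> : n = N by lia.
  by rewrite HN.
Qed.

Local Open Scope ring_scope.
Definition Tp N k (x : K) : K :=
  \sum_(p : {ffun 'I_N -> 'I_N} | Inv p && (fc p == k)) x ^+ crossings p.

Lemma part1T N k x :
  \sum_(p : {ffun 'I_N.+1 -> 'I_N.+1} | Inv p && (fc p == k) && (nf p N == N)) x ^+ crossings p
  = if k is k'.+1 then Tp N k' x else 0.
Proof.
rewrite (reindex_onto (@ext N) (@res N)); last first.
  by move=> p /andP[/andP[H1 _] /eqP H2]; apply: ext_res.
under eq_bigl => p do rewrite Inv_ext fc_ext res_ext eqxx /= nf_ext nf_ge // eqxx !andbT.
under eq_bigr => p _ do rewrite cr_ext.
case: k => [|k]; last by [].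
by rewrite big_pred0 // => p; rewrite andbF.
Qed.

End SF.

Section SG.
Local Close Scope ring_scope.

Section Build.
Variables (N : nat) (p : {ffun 'I_N -> 'I_N}) (a : 'I_N).
Hypothesis Hfix : p a == a.

Let g := nf p.
Lemma ga : g a = a.
Proof. by rewrite /g nf_val (eqP Hfix). Qed.
Lemma glt n : n < N -> g n < N.
Proof. exact: nf_lt. Qed.
Lemma gge n : N <= n -> g n = n.
Proof. exact: nf_ge. Qed.

Lemma Inv_build : Inv p -> Inv (build (p, a)).
Proof.
move=> /InvP Hg; apply/InvP => n.
have Ha := ltn_ord a; have Hga := ga.
rewrite !nf_build /=.
case: (leqP n N) => H1; last by rewrite leqNgt H1.
case: (eqVneq n a) => H2.
  rewrite leqnn; case: (eqVneq N a) => H3; [lia|]. by rewrite eqxx H2.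
case: (eqVneq n N) => H3.
  by rewrite (ltnW Ha) eqxx H3.
have Hn : n < N by lia.
have Hgn := glt Hn.
rewrite (ltnW Hgn); case: (eqVneq (nf p n) a) => H4.
  have := Hg n; rewrite H4 -/g Hga => E; rewrite E eqxx in H2; done.
have -> : (nf p n == N) = false by apply/negbTE; rewrite neq_ltn Hgn.
exact: Hg.
Qed.

Lemma nfN_build : nf (build (p, a)) N = a.
Proof.
rewrite nf_build leqnn /=; have Ha := ltn_ord a.
have -> : (N == a) = false by apply/negbTE; rewrite neq_ltn Ha orbT.
by rewrite eqxx.
Qed.

Lemma nf_build_lt n : n < N -> nf (build (p, a)) n = if n == a then N else g n.
Proof.
move=> Hn; rewrite nf_build (ltnW Hn) /=.
by have -> : (n == N) = false by apply/negbTE; rewrite neq_ltn Hn.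
Qed.

Lemma res_build : res (build (p, a)) = p.
Proof.
apply: nf_inj => n Hn; rewrite nf_res Hn nf_build_lt //=.
case: (eqVneq n a) => [->|H]; first by rewrite ltnn /= -/g ga.
by rewrite glt.
Qed.

Lemma destr_build : destr (build (p, a)) = Some (p, a).
Proof. by rewrite /destr nfN_build valK /= res_build. Qed.

Lemma sum_eq1 (b M : nat) : b < M -> \sum_(0 <= n < M) (n == b : nat) = 1.
Proof.
move=> Hb; rewrite big_mkord (@sum_only _ (Ordinal Hb)) ?eqxx //.
move=> i Hi; apply/eqP; rewrite eqb0; apply: contra Hi => /eqP E; apply/eqP/val_inj.
by [].
Qed.

Lemma fc_build : (fc (build (p, a))).+1 = fc p.
Proof.
rewrite /fc !fcE big_nat_recr //= nfN_build.
have -> : (val a == N) = false by apply/negbTE; rewrite neq_ltn ltn_ord.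
rewrite addn0 -addn1 -(@sum_eq1 a N (ltn_ord a)) -big_split /=.
apply: eq_big_nat => n /andP[_ Hn]; rewrite nf_build_lt //.
case: (eqVneq n a) => [->|H]; last by rewrite addn0.
rewrite -/g ga eqxx /=.
by have -> : (N == a) = false by apply/negbTE; rewrite neq_ltn ltn_ord orbT.
Qed.

Lemma cr_build : crossings (build (p, a)) =
  crossings p + \sum_(0 <= c < N) ((nf p c == c) && (a < c)).
Proof.
rewrite !crossingsE Cr_step; last first.
  move=> n Hn; rewrite nf_build_lt //; case: (n == a) => //; exact: ltnW (glt Hn).
apply: Cr_case2.
- exact: (ltn_ord a).
- exact: ga.
- exact: glt.
- exact: nf_build_lt.
Qed.
End Build.

Section Destr.
Variables (N : nat) (p : {ffun 'I_N.+1 -> 'I_N.+1}).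
Hypotheses (HI : Inv p) (HN : nf p N != N).

Local Notation g := (nf p).
Lemma gg n : g (g n) = n.
Proof. by move/InvP: HI. Qed.
Lemma gN : g N < N.
Proof. have : g N < N.+1 by apply: nf_lt. move: HN;  lia. Qed.
Lemma gNlt n : n < N -> n != g N -> g n < N.
Proof.
move=> Hn Hne; have : g n < N.+1 by apply: nf_lt; lia.
case: (eqVneq (g n) N) => E; last by lia.
by have := gg n; rewrite E => E'; rewrite E' eqxx in Hne.
Qed.

Lemma nf_res' n : nf (res p) n = if (n < N) && (n != g N) then g n else n.
Proof.
rewrite nf_res; case: (ltnP n N) => //= Hn.
case: (eqVneq n (g N)) => [E|E] /=.
  by rewrite E gg ltnn.
by rewrite gNlt.
Qed.

Lemma Inv_res : Inv (res p).
Proof.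
apply/InvP => n; rewrite !nf_res'.
case: (ltnP n N) => Hn /=; last by rewrite ltnNge Hn.
case: (eqVneq n (g N)) => E /=; last first.
  have H1 : g n < N := gNlt Hn E.
  have H2 : g n != g N.
    apply/eqP => E'; have := f_equal (nf p) E'; rewrite !gg => E''; lia.
  by rewrite H1 H2 /= gg.
by rewrite Hn E eqxx.
Qed.

Lemma destr_res : exists a : 'I_N, val a = g N /\ destr p = Some (res p, a).
Proof.
rewrite /destr; case: insubP => [a _ Ea|]; first by exists a.
by rewrite gN.
Qed.

Lemma res_fix (a : 'I_N) : val a = g N -> res p a == a.
Proof.
move=> Ea; rewrite -val_eqE /= -nf_val nf_res' Ea eqxx andbF.
by [].
Qed.

Lemma fc_res : fc (res p) = (fc p).+1.
Proof.
have Ha := gN.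
rewrite /fc !fcE big_nat_recr //=.
have -> : (g N == N) = false by apply/negbTE.
rewrite addn0 -addn1 -(@sum_eq1 (g N) N Ha) -big_split /=.
apply: eq_big_nat => n /andP[_ Hn]; rewrite nf_res' Hn /=.
case: (eqVneq n (g N)) => [E|E] /=; last by rewrite addn0.
rewrite eqxx E gg.
by have -> : (N == g N) = false by apply/negbTE; rewrite neq_ltn Ha orbT.
Qed.

Lemma build_res (a : 'I_N) : val a = g N -> build (res p, a) = p.
Proof.
move=> Ea; apply: nf_inj => n Hn; rewrite nf_build Ea /=.
have -> : n <= N by lia.
case: (eqVneq n (g N)) => [->|E]; first by rewrite gg.
case: (eqVneq n N) => [->//|E2].
rewrite nf_res' E andbT.
by have -> : n < N by lia.
Qed.
End Destr.

End SG.

Section SH.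
Local Close Scope ring_scope.
Local Open Scope ring_scope.

Lemma rank_fix N (p : {ffun 'I_N -> 'I_N}) (x : K) :
  \sum_(a : 'I_N | p a == a) x ^+ (\sum_(0 <= c < N) ((nf p c == c) && (a < c)))%N
  = \sum_(0 <= i < fc p) x ^+ i.
Proof.
rewrite /fc fcE -(rank_sum (fun c => nf p c == c)) big_mkord.
by apply: eq_bigl => a; rewrite nf_val val_eqE.
Qed.

Lemma part2T N k x :
  \sum_(p : {ffun 'I_N.+1 -> 'I_N.+1} | Inv p && (fc p == k) && ~~ (nf p N == N)) x ^+ crossings p
  = (\sum_(0 <= i < k.+1) x ^+ i) * Tp N k.+1 x.
Proof.
rewrite (reindex_omap (@build N) (@destr N)); last first.
  move=> p /andP[/andP[HI _] HN]; have [a [Ea ->]] := destr_res HI HN.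
  by rewrite /= build_res.
transitivity (\sum_(p' : {ffun 'I_N -> 'I_N} | Inv p' && (fc p' == k.+1))
   \sum_(a : 'I_N | p' a == a) x ^+ (crossings p' + \sum_(0 <= c < N) ((nf p' c == c) && (a < c)))%N).
  rewrite pair_big_dep; symmetry; apply: eq_big => [[p' a]|[p' a]] /=; last first.
    by move=> /andP[_ Hfix]; rewrite cr_build.
  apply/idP/idP; last first.
  - move=> /andP[/andP[/andP[HI Hfc] HN] /eqP Hd].
    have [a' [Ea' Hd']] := destr_res HI HN.
    rewrite Hd' in Hd; case: Hd => E1 E2.
    have h1 := Inv_res HI HN; have h2 := fc_res HI HN; have h3 := res_fix HI HN Ea'.
    rewrite E1 in h1 h2 h3; rewrite E2 in h3.
    by rewrite h1 h2 (eqP Hfc) eqxx h3.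
  - move=> /andP[/andP[HI Hfc] Hfix].
    rewrite Inv_build //= destr_build // eqxx andbT nfN_build //.
    rewrite -eqSS fc_build // Hfc /=.
    by rewrite neq_ltn ltn_ord.
rewrite /Tp mulr_sumr; apply: eq_bigr => p' /andP[_ Hfc].
under eq_bigr => a _ do rewrite exprD.
by rewrite -mulr_sumr rank_fix (eqP Hfc) mulrC.
Qed.

Lemma Tp_rec N k x :
  Tp N.+1 k x = (if k is k'.+1 then Tp N k' x else 0) + (\sum_(0 <= i < k.+1) x ^+ i) * Tp N k.+1 x.
Proof.
by rewrite /Tp (bigID (fun p => nf p N == N)) /= part1T part2T.
Qed.

End SH.

Section SI.
Local Close Scope ring_scope.
Local Open Scope ring_scope.

Lemma q_neq0 : q != 0.
Proof. by rewrite /q tofrac_eq0 polyX_eq0. Qed.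

Lemma qX_neq1 n : (0 < n)%N -> q ^+ n != 1.
Proof.
move=> Hn; rewrite /q -tofracXn -tofrac1 tofrac_eq.
apply/eqP => E; have := @size_polyXn rat n; rewrite E size_poly1; lia.
Qed.

Lemma gen1 (F : fieldType) (y : F) : y != 0 -> y - y^-1 = (y ^+ 2 - 1) / y.
Proof. move=> Hy; field. done. Qed.

Lemma gen_qint_neq0 (F : fieldType) (y : F) n : y != 0 -> y ^+ 2 != 1 -> y ^+ (n.+1 * 2) != 1 ->
  (y ^+ n.+1 - y ^- n.+1) / (y - y^-1) != 0.
Proof.
move=> Hy H2 H3.
have Hz : y ^+ n.+1 != 0 by rewrite expf_neq0.
have -> : y ^+ n.+1 - y ^- n.+1 = (y ^+ n.+1 ^+ 2 - 1) / y ^+ n.+1 by field.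
rewrite gen1 //.
rewrite !mulf_neq0 ?invr_eq0 ?subr_eq0 // -?exprM //.
rewrite mulf_neq0 ?invr_eq0 ?subr_eq0 //.
Qed.

Lemma gen_D (F : fieldType) (y : F) : y != 0 -> y ^+ 2 != 1 -> 1 - y ^- 2 != 0.
Proof.
move=> Hy H2; have Hz : y ^+ 2 != 0 by rewrite expf_neq0.
have -> : 1 - y ^- 2 = (y ^+ 2 - 1) / y ^+ 2 by field.
by rewrite mulf_neq0 ?invr_eq0 ?subr_eq0.
Qed.

Lemma gen_key (F : fieldType) (y : F) n : y != 0 -> y ^+ 2 != 1 ->
  \sum_(0 <= i < n.+1) (y ^+ 2) ^+ i = (y ^+ n.+1 / y) * ((y ^+ n.+1 - y ^- n.+1) / (y - y^-1)).
Proof.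
move=> Hy H2.
have H2' : y ^+ 2 - 1 != 0 by rewrite subr_eq0.
apply: (mulfI H2').
rewrite big_mkord -subrX1 -exprM.
have Hz : y ^+ n != 0 by rewrite expf_neq0.
rewrite mulnC exprM !exprS expr0 mulr1.
field.
by rewrite Hy Hz andbT /= -expr2 subr_eq0.
Qed.

Lemma q2_neq1 : q ^+ 2 != 1.
Proof. exact: qX_neq1. Qed.

Lemma qint0 : qint 0 = 0.
Proof. by rewrite /qint expr0 invr1 subrr mul0r. Qed.

Lemma qint_neq0 n : qint n.+1 != 0.
Proof. apply: gen_qint_neq0; [exact: q_neq0 | exact: q2_neq1 | apply: qX_neq1; by rewrite muln2]. Qed.

Lemma qfact_neq0 n : qfact n != 0.
Proof. rewrite /qfact; apply/prodf_neq0 => i _; exact: qint_neq0. Qed.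

Lemma qfactS n : qfact n.+1 = qfact n * qint n.+1.
Proof. by rewrite /qfact big_ord_recr. Qed.

Lemma qfact0 : qfact 0 = 1.
Proof. by rewrite /qfact big_ord0. Qed.

Lemma D_neq0 : 1 - q ^- 2 != 0.
Proof. exact: (gen_D q_neq0 q2_neq1). Qed.

Lemma key_sum n : \sum_(0 <= i < n.+1) (q ^+ 2) ^+ i = (q ^+ n.+1 / q) * qint n.+1.
Proof. exact: (gen_key n q_neq0 q2_neq1). Qed.

End SI.

Section SJ.
Local Close Scope ring_scope.
Local Open Scope ring_scope.

Definition Dm n := (DeltaPair n).2.
Definition cc n : K := (q ^+ n / q) / (1 - q ^- 2).

Lemma DP n : DeltaPair n.+1 = ((qint n.+1)^-1 *: (B * Delta n - cc n *: Dm n), Delta n).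
Proof. rewrite /Delta /Dm /cc /=; by case: (DeltaPair n). Qed.

Lemma DmS n : Dm n.+1 = Delta n.
Proof. by rewrite /Dm DP. Qed.

Lemma Dm0 : Dm 0 = 0.
Proof. by []. Qed.

Lemma Delta0 : Delta 0 = 1.
Proof. by []. Qed.

Lemma BDelta n : B * Delta n = qint n.+1 *: Delta n.+1 + cc n *: Dm n.
Proof.
rewrite {2}/Delta DP /= scalerA mulfV ?qint_neq0 // scale1r subrK.
by [].
Qed.

Lemma Delta_size n : [/\ (size (Delta n) <= n.+1)%N, (Delta n)`_n = (qfact n)^-1 & (size (Dm n) <= n)%N].
Proof.
elim: n => [|n [IH1 IH2 IH3]].
  split.
  - by rewrite Delta0 size_poly1.
  - by rewrite Delta0 coef1 eqxx qfact0 invr1.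
  - by rewrite Dm0 size_poly0.
have E : Delta n.+1 = (qint n.+1)^-1 *: (B * Delta n - cc n *: Dm n) by rewrite {1}/Delta DP.
split; last by rewrite DmS.
- rewrite E; apply: leq_trans (size_scale_leq _ _) _.
  apply: leq_trans (size_polyD _ _) _; rewrite size_polyN.
  have h1 : (size (B * Delta n)%R <= n.+2)%N.
    apply: leq_trans (size_polyMleq _ _) _; rewrite /B size_polyX; lia.
  have h2 : (size (cc n *: Dm n)%R <= n.+2)%N.
    apply: leq_trans (size_scale_leq _ _) _; lia.
  rewrite geq_max h1 h2 //.
- have hX : ('X * Delta n)`_n.+1 = (Delta n)`_n by rewrite coefXM.
  rewrite E coefZ coefB coefZ /B hX IH2.
  rewrite [(Dm n)`_n.+1]nth_default; last exact: leq_trans IH3 (leqnSn n).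
  by rewrite mulr0 subr0 qfactS [RHS]invfM mulrC.
Qed.

Lemma top_coef m (c : nat -> K) : \sum_(n < m.+1) c n *: Delta n = 0 -> c m = 0.
Proof.
move=> H; have := f_equal (fun p : {poly K} => p`_m) H.
rewrite coef_sum coef0 big_ord_recr /= coefZ.
have [_ -> _] := Delta_size m.
rewrite big1 ?add0r; last first.
  move=> i _; rewrite coefZ nth_default ?mulr0 //.
  have [h _ _] := Delta_size i; apply: leq_trans h _; exact: ltn_ord.
move/eqP; rewrite mulf_eq0 invr_eq0 (negbTE (qfact_neq0 m)) orbF.
by move/eqP.
Qed.

Lemma uniq_coef m (c : nat -> K) : \sum_(n < m.+1) c n *: Delta n = 0 -> forall n, (n <= m)%N -> c n = 0.
Proof.
elim: m c => [|m IH] c H n Hn.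
  have -> : n = 0%N by lia.
  exact: top_coef H.
have Hm := top_coef H.
case: (ltnP n m.+1) => Hn'; last by have -> : n = m.+1 by lia.
apply: IH => //.
by move: H; rewrite big_ord_recr /= Hm scale0r addr0.
Qed.

End SJ.

Section SL.
Local Close Scope ring_scope.
Local Open Scope ring_scope.

Lemma gen_id1 (F : fieldType) (a s t b e d : F) :
  a * (s * t * b) / (e * d) = (s / d) * (a * t * b / e).
Proof. rewrite invfM; ring. Qed.

Lemma gen_id2 (F : fieldType) (a b c d : F) : a * b * c / d = b * (a * c / d).
Proof. ring. Qed.

Section T0.
Variable x : K.
Let p0uniq : forall p p' : {ffun 'I_0 -> 'I_0}, p = p'.
Proof. by move=> p p'; apply/ffunP => [[i Hi]]. Qed.
Let fc0 : forall p : {ffun 'I_0 -> 'I_0}, fc p = 0%N.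
Proof. by move=> p; rewrite /fc fcE big_geq. Qed.
Let cr0 : forall p : {ffun 'I_0 -> 'I_0}, crossings p = 0%N.
Proof. by move=> p; rewrite crossingsE /Cr big_geq. Qed.
Let inv0 : forall p : {ffun 'I_0 -> 'I_0}, Inv p.
Proof. by move=> p; apply/forallP => [[i Hi]]. Qed.

Lemma Tp00 : Tp 0 0 x = 1.
Proof.
pose p0 : {ffun 'I_0 -> 'I_0} := [ffun i => i].
rewrite /Tp (big_pred1 p0); first by rewrite cr0 expr0.
by move=> p /=; rewrite inv0 fc0 (p0uniq p p0) !eqxx.
Qed.

Lemma Tp0S k : Tp 0 k.+1 x = 0.
Proof. rewrite /Tp big_pred0 //; by move=> p /=; rewrite fc0 andbF. Qed.
End T0.

Lemma TpZ N : forall k x, Tp N k x != 0 -> (k <= N)%N && (odd N == odd k).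
Proof.
elim: N => [|N IH] k x.
  case: k => [|k]; first by [].
  by rewrite Tp0S eqxx.
rewrite Tp_rec => H.
have [HB|HB] := eqVneq (Tp N k.+1 x) 0; last first.
  move/andP: (IH _ _ HB) => [h1 h2].
  apply/andP; split; first by clear -h1; lia.
  by move: h2 => /=; case: (odd N); case: (odd k).
move: H; rewrite HB mulr0 addr0; clear HB.
case: k => [|k] H; first by rewrite eqxx in H.
move/andP: (IH _ _ H) => [h1 h2].
apply/andP; split; first by [].
by move: h2 => /=; case: (odd N); case: (odd k).
Qed.

Lemma TpZ0 N k x : ~~ ((k <= N)%N && (odd N == odd k)) -> Tp N k x = 0.
Proof. move=> H; apply/eqP; apply: contraR H; exact: TpZ. Qed.

Definition u m n : K := qfact n * Tp m n (q ^+ 2) / (1 - q ^- 2) ^+ ((m - n)./2).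

Lemma u_big m n : (m < n)%N -> u m n = 0.
Proof.
move=> H; rewrite /u TpZ0 ?mulr0 ?mul0r //.
by rewrite negb_and -ltnNge H.
Qed.

Lemma half_step m n : (n.+1 <= m)%N -> odd m = odd n.+1 -> (m.+1 - n)./2 = ((m - n.+1)./2).+1.
Proof.
move=> H1 H2.
have Ho : odd (m - n.+1) = false by rewrite oddB // H2 addbb.
have E := odd_double_half (m - n.+1); rewrite Ho add0n in E.
have -> : (m.+1 - n = ((m - n.+1)./2).+1.*2)%N by rewrite doubleS E; lia.
by rewrite doubleK.
Qed.

Lemma u_rec m n : u m.+1 n = qint n * u m n.-1 + cc n.+1 * u m n.+1.
Proof.
rewrite /u Tp_rec mulrDr mulrDl; congr (_ + _).
  case: n => [|n]; first by rewrite mulr0 mul0r qint0 mul0r.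
  by rewrite qfactS subSS /= gen_id2.
have [HB|HB] := eqVneq (Tp m n.+1 (q ^+ 2)) 0.
  by rewrite HB !mulr0 !mul0r mulr0.
move/andP: (TpZ HB) => [h1 /eqP h2].
rewrite (half_step h1 h2) [_ ^+ (_./2).+1]exprSr key_sum qfactS /cc.
exact: gen_id1.
Qed.

Lemma expand m : B ^+ m = \sum_(n < m.+1) u m n *: Delta n.
Proof.
elim: m => [|m IH].
  rewrite expr0 big_ord1 /u qfact0 Tp00 expr0 !mul1r invr1 Delta0.
  by rewrite scale1r.
rewrite exprS IH mulr_sumr.
under eq_bigr => n _ do rewrite -scalerAr BDelta scalerDr !scalerA.
rewrite big_split /=.
under [in RHS]eq_bigr => n _ do rewrite u_rec scalerDl.
rewrite big_split /=; congr (_ + _).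
  rewrite [in RHS]big_ord_recl qint0 mul0r scale0r add0r.
  by apply: eq_bigr => n _; rewrite /= mulrC.
rewrite [in RHS]big_ord_recr /= (@u_big m m.+2 (leqnSn m.+1)) mulr0 scale0r addr0.
rewrite [in LHS]big_ord_recl Dm0 scaler0 add0r.
rewrite [in RHS]big_ord_recr /= (u_big (ltnSn m)) mulr0 scale0r addr0.
by apply: eq_bigr => n _; rewrite /= DmS mulrC.
Qed.

End SL.


Unset Implicit Arguments.
Theorem theorem2p5 (w : nat -> nat -> K) :
  (forall m : nat, B ^+ m = \sum_(n < m.+1) w m n *: Delta n) ->
  forall m n : nat, (n <= m)%N -> odd m = odd n ->
    w m n = qfact n * T_eval ((m - n)./2) n (q ^+ 2) / (1 - q ^- 2) ^+ ((m - n)./2).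
Proof.
move=> Hw m n Hnm Hodd.
have E : w m n = u m n.
  apply/eqP; rewrite -subr_eq0; apply/eqP.
  apply: (@uniq_coef m (fun k => w m k - u m k)) Hnm.
  under eq_bigr => k _ do rewrite scalerBl.
  by rewrite sumrB -Hw -expand subrr.
rewrite E /u.
have Hm : (2 * ((m - n)./2) + n)%N = m.
  have Ho : odd (m - n) = false by rewrite oddB // Hodd addbb.
  have E2 := odd_double_half (m - n); rewrite Ho add0n in E2.
  rewrite mul2n E2; lia.
have -> : T_eval ((m - n)./2) n (q ^+ 2) = Tp m n (q ^+ 2).
  change (Tp (2 * ((m - n)./2) + n) n (q ^+ 2) = Tp m n (q ^+ 2)).
  by rewrite Hm.
by [].
Qed.
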